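(* Let $p$ be even, $V=\{1,\dots,p\}$, and $\tau$ a twin-pairing function on $V$. The number of pdCGs (equivalently, of RCON models for paired data) on $V$ is $$|\mathcal{P}(V)|=2^{p/2}\sum_{i=0}^{p(p-2)/4}\binom{p(p-2)/4}{i}\,2^{\binom{p}{2}-2i}.$$
   Context: A twin-pairing function is a map $\tau:V\to V$ such that $\tau(i)=j$ implies $\tau(j)=i$ and there is a partition $V=L\cup R$, $L\cap R=\emptyset$, with $\tau(L)=R$ (so $|L|=|R|=p/2$). Let $F_V=\{(i,j)\mid i,j\in V,\ i<j\}$ and extend $\tau$ to edges by $\tau(i,j)=(\tau(i),\tau(j))$, endpoints reordered to lie in $F_V$. A coloured graph with vertex set $V$ is a pair $(\mathcal{V},\mathcal{E})$ where $\mathcal{V}$ is a partition of $V$ and $\mathcal{E}$ is a partition of some edge set $E\subseteq F_V$. A colour class is atomic if it has exactly one element and twin-pairing if it is of the form $\{i,\tau(i)\}$ or $\{(i,j),\tau(i,j)\}$ with $(i,j)\neq\tau(i,j)$. A pdCG (coloured graph for paired data) is a coloured graph in which every colour class is atomic or twin-pairing; $\mathcal{P}(V)$ is the set of pdCGs on $V$. Each pdCG $\mathcal{G}$ defines the RCON model of normal distributions on $\mathbb{R}^V$ whose concentration matrix has zero entries for non-edges and equal entries within each colour class, and distinct pdCGs define distinct models. *)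

(* Defs.v *)
From mathcomp Require Import all_boot.
Set Implicit Arguments. Unset Strict Implicit. Unset Printing Implicit Defensive.

(* Vertex set V = {1,...,p} is represented by 'I_p (i.e. {0,...,p-1}). *)

Definition twin_pairing (p : nat) (tau : 'I_p -> 'I_p) : Prop :=
  (forall i j, tau i = j -> tau j = i) /\
  exists L R : {set 'I_p},
    [/\ L :&: R = set0, L :|: R = [set: 'I_p] & tau @: L = R].

Definition edge (p : nat) := ('I_p * 'I_p)%type.

Definition FV (p : nat) : {set edge p} := [set e : edge p | e.1 < e.2].

Definition tau_edge (p : nat) (tau : 'I_p -> 'I_p) (e : edge p) : edge p :=
  if tau e.1 < tau e.2 then (tau e.1, tau e.2) else (tau e.2, tau e.1).

(* coloured graph (calV, calE): calV a partition of V, calE a partition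
   of some edge set E included in F_V (E = cover calE). Boolean predicates. *)
Definition coloured_graph (p : nat)
  (G : {set {set 'I_p}} * {set {set edge p}}) : bool :=
  [&& partition G.1 [set: 'I_p],
      partition G.2 (cover G.2) & cover G.2 \subset FV p].

Definition atomic (T : finType) (C : {set T}) : bool := #|C| == 1.

Definition twin_vertex_class (p : nat) (tau : 'I_p -> 'I_p) (C : {set 'I_p})
  : bool := [exists i, C == [set i; tau i]].

Definition twin_edge_class (p : nat) (tau : 'I_p -> 'I_p) (C : {set edge p})
  : bool := [exists e, [&& e \in FV p, e != tau_edge tau e &
                                      C == [set e; tau_edge tau e]]].

Definition pdCG (p : nat) (tau : 'I_p -> 'I_p)
  (G : {set {set 'I_p}} * {set {set edge p}}) : bool :=
  [&& coloured_graph G,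
      [forall C in G.1, atomic C || twin_vertex_class tau C] &
      [forall C in G.2, atomic C || twin_edge_class tau C]].

Definition pdCGs (p : nat) (tau : 'I_p -> 'I_p)
  : {set {set {set 'I_p}} * {set {set edge p}}} :=
  [set G | pdCG tau G].

(* Main.v *)
Require Import Defs.
From mathcomp Require Import all_boot zify.
Set Implicit Arguments. Unset Strict Implicit. Unset Printing Implicit Defensive.

Section Generic.
Variable T : finType.
Variable Rp : {set T}.
Variable o : T -> {set T}.
Variable allowed : {set T} -> bool.
Variable full : bool.
Hypothesis Hdisj : forall x y, x \in Rp -> y \in Rp -> x != y -> [disjoint o x & o y].
Hypothesis Hall : forall b, allowed b -> b != set0 -> exists2 x, x \in Rp & b \subset o x.
Hypothesis Hcov : full -> forall t, exists2 x, x \in Rp & t \in o x.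

Definition Good (P : {set {set T}}) :=
  [&& trivIset P, set0 \notin P, [forall b in P, allowed b] & full ==> (cover P == setT)].

Definition Loc x : {set {set {set T}}} :=
  [set Q : {set {set T}} | [&& Q \subset [set b | allowed b & b \subset o x], trivIset Q, set0 \notin Q &
            full ==> (cover Q == o x)]].

Definition restr x (P : {set {set T}}) := [set b in P | b \subset o x].

Lemma same_rep x y b : x \in Rp -> y \in Rp -> b != set0 -> b \subset o x -> b \subset o y -> x = y.
Proof.
move=> xR yR /set0Pn[t tb] bx byy; apply/eqP; apply: contraT => nxy.
have := Hdisj xR yR nxy; rewrite disjoint_subset => /subsetP/(_ t).
by rewrite inE (subsetP bx) // (subsetP byy) //; move/(_ isT).
Qed.

Lemma Good_decomp P : Good P -> P = \bigcup_(x in Rp) restr x P.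
Proof.
case/and4P=> _ P0 /forall_inP Pa _; apply/setP=> b; apply/idP/bigcupP.
  move=> bP; have bn0 : b != set0 by apply: contraNneq P0 => <-.
  have [x xR bx] := Hall (Pa _ bP) bn0; exists x => //; by rewrite inE bP.
by case=> x _; rewrite inE => /andP[].
Qed.

Definition fP (P : {set {set T}}) : {dffun forall x : T, {set {set T}}} :=
  [ffun x => if x \in Rp then restr x P else set0].

Definition Aset x : {set {set {set T}}} := if x \in Rp then Loc x else [set set0].

Lemma image_Good : fP @: [set P | Good P] = setXn Aset.
Proof.
apply/setP=> g; apply/imsetP/setXnP.
  case=> P; rewrite inE => GP ->{g} x; rewrite ffunE /Aset.
  case: ifP => xR; last by rewrite inE.
  move: (GP) => /and4P[tP P0 /forall_inP Pa Pc].
  rewrite inE; apply/and4P; split.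
  - apply/subsetP=> b; rewrite !inE => /andP[bP ->]; by rewrite Pa.
  - by apply: trivIsetS tP; apply/subsetP=> b; rewrite inE => /andP[].
  - by rewrite inE negb_and P0.
  - apply/implyP=> fu; move/implyP: Pc => /(_ fu)/eqP Pc.
    apply/eqP/setP=> t; apply/bigcupP/idP.
      by case=> b; rewrite inE => /andP[_ /subsetP]; apply.
    move=> tx; have : t \in cover P by rewrite Pc inE.
    case/bigcupP=> b bP tb; exists b => //; rewrite inE bP /=.
    have bn0 : b != set0 by apply/set0Pn; exists t.
    have [y yR bY] := Hall (Pa _ bP) bn0.
    suff -> : x = y by [].
    apply/eqP; apply: contraT => nxy.
    have := Hdisj xR yR nxy; rewrite disjoint_subset => /subsetP/(_ t).
    by rewrite inE tx (subsetP bY) //; move/(_ isT).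
move=> gA.
have gL x : x \in Rp -> g x \in Loc x by move=> xR; have := gA x; rewrite /Aset xR.
have gN x : x \notin Rp -> g x = set0.
  by move=> /negbTE xR; have := gA x; rewrite /Aset xR inE => /eqP.
have gsub x b : x \in Rp -> b \in g x -> [/\ allowed b, b \subset o x & b != set0].
  move=> xR bg; have := gL x xR; rewrite inE => /and4P[/subsetP/(_ b bg) + _ P0 _].
  by rewrite inE => /andP[-> ->]; split=> //; apply: contraNneq P0 => <-.
set P := \bigcup_(x in Rp) g x.
have rP x : x \in Rp -> restr x P = g x.
  move=> xR; apply/setP=> b; rewrite inE; apply/andP/idP.
    case=> /bigcupP[y yR bg] bx; have [_ byy bn0] := gsub y b yR bg.
    by rewrite (same_rep xR yR bn0 bx byy).
  move=> bg; have [_ bx _] := gsub x b xR bg; split => //.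
  by apply/bigcupP; exists x.
exists P.
  rewrite inE; apply/and4P; split.
  - apply/trivIsetP=> b1 b2 /bigcupP[x xR b1g] /bigcupP[y yR b2g] neq.
    have [_ b1x _] := gsub x b1 xR b1g; have [_ b2y _] := gsub y b2 yR b2g.
    have [exy|nxy] := eqVneq x y.
      subst y; have := gL x xR; rewrite inE => /and4P[_ /trivIsetP tI _ _].
      exact: tI.
    have := Hdisj xR yR nxy; rewrite !disjoint_subset => /subsetP H.
    apply/subsetP=> t tb1; have := H t (subsetP b1x t tb1).
    by rewrite !inE; apply: contra => tb2; apply: (subsetP b2y).
  - apply/negP=> /bigcupP[x xR bg]; have [_ _] := gsub x set0 xR bg.
    by rewrite eqxx.
  - apply/forall_inP=> b /bigcupP[x xR bg]; by have [] := gsub x b xR bg.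
  - apply/implyP=> fu; apply/eqP/setP=> t; rewrite inE; apply/idP.
    have [x xR tx] := Hcov fu t.
    have := gL x xR; rewrite inE => /and4P[_ _ _ /implyP/(_ fu)/eqP cx].
    move: tx; rewrite -cx => /bigcupP[b bg tb]; apply/bigcupP; exists b => //.
    by apply/bigcupP; exists x.
apply/ffunP=> x; rewrite ffunE; case: ifP => xR; first by rewrite rP.
by rewrite gN // xR.
Qed.

Lemma card_Good : #|[set P | Good P]| = \prod_(x in Rp) #|Loc x|.
Proof.
rewrite -(card_in_imset (f := fP)); last first.
  move=> P1 P2; rewrite !inE => G1 G2 e.
  rewrite (Good_decomp G1) (Good_decomp G2); apply: eq_bigr => x xR.
  by move/ffunP/(_ x): e; rewrite !ffunE xR.
rewrite image_Good cardsXn (bigID (mem Rp)) /= [X in _ * X]big1 ?muln1.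
  by apply: eq_bigr => x xR; rewrite /Aset xR.
by move=> x /negbTE xR; rewrite /Aset xR cards1.
Qed.
End Generic.
Section Local.
Variable T : finType.

Lemma set1_neq2 (a b : T) : a != b -> [set a] != [set a; b].
Proof.
move=> nab; apply/negP=> /eqP/setP/(_ b); rewrite !inE eqxx orbT.
by rewrite eq_sym (negbTE nab).
Qed.

Lemma set1_neq (a b : T) : a != b -> [set a] != [set b].
Proof. by move=> nab; apply/negP=> /eqP/setP/(_ a); rewrite !inE eqxx (negbTE nab). Qed.

Lemma triv_ab (a b : T) : a != b -> trivIset [set [set a]; [set b]].
Proof.
move=> nab; apply/trivIsetP=> c d; rewrite !inE => /orP[]/eqP-> /orP[]/eqP->;
 rewrite ?eqxx // => _; rewrite disjoint_sym ?disjoints1 !inE // eq_sym //.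
Qed.

Lemma set0_neq1 (a : T) : (set0 == [set a]) = false.
Proof. by apply/negP=> /eqP/setP/(_ a); rewrite !inE eqxx. Qed.

Lemma set0_neq2 (a b : T) : (set0 == [set a; b]) = false.
Proof. by apply/negP=> /eqP/setP/(_ a); rewrite !inE eqxx. Qed.

Definition S3 (a b : T) : {set {set T}} := [set [set a]; [set b]; [set a; b]].

Lemma free_char (a b : T) (Q : {set {set T}}) : a != b ->
  [&& Q \subset S3 a b, trivIset Q & set0 \notin Q] =
  (Q == [set [set a; b]]) || (Q \subset [set [set a]; [set b]]).
Proof.
move=> nab; apply/idP/idP.
  case/and3P=> QS tQ Q0.
  case abQ : ([set a; b] \in Q).
    apply/orP; left; rewrite eqEsubset; apply/andP; split; last first.
      by rewrite sub1set.
    apply/subsetP=> c cQ; rewrite inE; have := subsetP QS c cQ; rewrite /S3.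
    rewrite !inE => /orP[/orP[]|] /eqP ce; subst c => //.
    - move/trivIsetP: tQ => /(_ _ _ cQ abQ (set1_neq2 nab)).
      by rewrite disjoints1 !inE eqxx.
    - move/trivIsetP: tQ => /(_ _ _ cQ abQ _).
      have ne : [set b] != [set a; b].
        by rewrite setUC; apply: set1_neq2; rewrite eq_sym.
      by move/(_ ne); rewrite disjoints1 !inE eqxx orbT.
  apply/orP; right; apply/subsetP=> c cQ; have := subsetP QS c cQ; rewrite /S3.
    by rewrite !inE => /orP[->|/eqP ce] //; subst c; rewrite cQ in abQ.
case/orP=> [/eqP->|sQ].
  rewrite trivIset1 inE set0_neq2 andbT sub1set !inE eqxx orbT //.
apply/and3P; split.
- apply: (subset_trans sQ); apply/subsetP=> c; rewrite /S3 !inE => /orP[]->; by rewrite ?orbT.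
- exact: trivIsetS sQ (triv_ab nab).
- apply/negP=> /(subsetP sQ); by rewrite !inE !set0_neq1.
Qed.

Lemma card_free2 (a b : T) : a != b ->
  #|[set Q : {set {set T}} | [&& Q \subset S3 a b, trivIset Q & set0 \notin Q]]| = 5.
Proof.
move=> nab.
have -> : [set Q : {set {set T}} | [&& Q \subset S3 a b, trivIset Q & set0 \notin Q]]
  = [set [set a; b]] |: powerset [set [set a]; [set b]].
  by apply/setP=> Q; rewrite !inE free_char.
rewrite cardsU1 card_powerset cards2 (set1_neq nab) inE sub1set !inE.
have -> : ([set a; b] == [set a]) = false by apply/negbTE; rewrite eq_sym set1_neq2.
have -> : ([set a; b] == [set b]) = false.
  by apply/negbTE; rewrite eq_sym setUC set1_neq2 // eq_sym.
by [].
Qed.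

Lemma cover_ab (a b : T) : cover [set [set a]; [set b]] = [set a; b].
Proof.
apply/setP=> t; apply/bigcupP/idP.
  by case=> c; rewrite !inE => /orP[]/eqP-> ; rewrite inE => ->; rewrite ?orbT.
rewrite !inE => /orP[]/eqP->; [exists [set a] | exists [set b]]; by rewrite !inE eqxx ?orbT.
Qed.

Lemma card_full2 (a b : T) : a != b ->
  #|[set Q : {set {set T}} | [&& Q \subset S3 a b, trivIset Q, set0 \notin Q &
       cover Q == [set a; b]]]| = 2.
Proof.
move=> nab.
have -> : [set Q : {set {set T}} | [&& Q \subset S3 a b, trivIset Q, set0 \notin Q &
       cover Q == [set a; b]]] = [set [set [set a]; [set b]]; [set [set a; b]]].
  apply/setP=> Q; rewrite !inE.
  have -> : [&& Q \subset S3 a b, trivIset Q, set0 \notin Q & cover Q == [set a; b]] =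
    [&& Q \subset S3 a b, trivIset Q & set0 \notin Q] && (cover Q == [set a; b]).
    by rewrite !andbA.
  rewrite free_char //; apply/idP/idP.
    case/andP=> /orP[/eqP->|sQ] /eqP cQ; first by rewrite eqxx orbT.
    apply/orP; left; rewrite eqEsubset sQ /=; apply/subsetP=> c.
    have ha : a \in cover Q by rewrite cQ !inE eqxx.
    have hb : b \in cover Q by rewrite cQ !inE eqxx orbT.
    case/bigcupP: ha => ca caQ aca; case/bigcupP: hb => cb cbQ bcb.
    have := subsetP sQ _ caQ; have := subsetP sQ _ cbQ.
    rewrite !inE => /orP[]/eqP ecb /orP[]/eqP eca; subst ca cb;
      move: aca bcb; rewrite !inE ?eqxx // => e1 e2;
      try (by move: nab; rewrite (eqP e1) eqxx); try (by move: nab; rewrite (eqP e2) eqxx).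
    by move=> /orP[]/eqP->.
  case/orP=> /eqP->.
    by rewrite cover_ab eqxx andbT subxx orbT.
  by rewrite eqxx /= /cover big_set1 eqxx.
rewrite cards2; suff -> : [set [set a]; [set b]] != [set [set a; b]] by [].
apply/negP=> /eqP/setP/(_ [set a]); rewrite !inE eqxx /= => /esym/eqP.
by move=> e; move: (set1_neq2 nab); rewrite -e eqxx.
Qed.

Lemma card_loc1 (a : T) :
  #|[set Q : {set {set T}} | [&& Q \subset [set [set a]], trivIset Q & set0 \notin Q]]| = 2.
Proof.
have -> : [set Q : {set {set T}} | [&& Q \subset [set [set a]], trivIset Q & set0 \notin Q]]
  = powerset [set [set a]].
  apply/setP=> Q; rewrite !inE; apply/idP/idP; first by case/andP.
  move=> sQ; rewrite sQ (trivIsetS sQ (trivIset1 _)) /=.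
  by apply/negP=> /(subsetP sQ); rewrite inE set0_neq1.
by rewrite card_powerset cards1.
Qed.
End Local.
Lemma arith k n : 'C(k * 2, 2) = k + 2 * n ->
  2 ^ k * 5 ^ n = \sum_(i < ((k * 2) * (k * 2 - 2) %/ 4).+1)
     'C((k * 2) * (k * 2 - 2) %/ 4, i) * 2 ^ ('C(k * 2, 2) - 2 * i).
Proof.
move=> hF.
have hC : 'C(k * 2, 2) = k * (k * 2).-1.
  by rewrite bin2 mulnAC muln2 doubleK.
have hn : n = k * (k - 1) by nia.
have hm : (k * 2) * (k * 2 - 2) %/ 4 = n.
  have -> : (k * 2) * (k * 2 - 2) = n * 4 by nia.
  by rewrite mulnK.
rewrite hm hF.
have -> : 5 = 4 + 1 by [].
rewrite expnDn big_distrr /=; apply: eq_bigr => i _.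
have hi : i <= n by rewrite -ltnS.
rewrite exp1n muln1 mulnCA; congr (_ * _).
have -> : k + 2 * n - 2 * i = k + 2 * (n - i) by lia.
by rewrite expnD expnM.
Qed.

Section Main.
Variables (p : nat) (tau : 'I_p -> 'I_p).
Hypothesis tauK : involutive tau.
Variable L : {set 'I_p}.
Hypothesis LR : forall i, (i \in L) = (tau i \notin L).

Lemma tau_neq i : tau i != i.
Proof. by apply/eqP=> e; have := LR i; rewrite e; case: (i \in L). Qed.

Lemma cardL2 : #|L| + #|L| = p.
Proof.
have inj := can_inj tauK.
have eC : ~: L = tau @: L.
  apply/setP=> i; rewrite inE; apply/idP/imsetP.
    by move=> iL; exists (tau i); [rewrite LR tauK | rewrite tauK].
  by case=> j jL ->; rewrite -LR.
by have := cardsC L; rewrite eC card_imset // card_ord.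
Qed.

Lemma cardL : #|L| = p %/ 2.
Proof. by rewrite -[X in _ = X %/ 2]cardL2 addnn -muln2 mulnK. Qed.

Definition allowedV (C : {set 'I_p}) := atomic C || twin_vertex_class tau C.
Definition oV (x : 'I_p) : {set 'I_p} := [set x; tau x].

Lemma rep_V t : exists2 x, x \in L & oV x = oV t.
Proof.
case tL: (t \in L); first by exists t.
exists (tau t); first by rewrite LR tauK tL.
by rewrite /oV tauK setUC.
Qed.

Lemma disj_V x y : x \in L -> y \in L -> x != y -> [disjoint oV x & oV y].
Proof.
move=> xL yL nxy; apply/pred0P=> t /=; rewrite !inE.
apply/negP=> /andP[/orP[]/eqP-> /orP[]/eqP e].
- by rewrite e eqxx in nxy.
- by move: xL; rewrite e LR tauK yL.
- by move: yL; rewrite -e LR tauK xL.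
- by move: nxy; rewrite (can_inj tauK e) eqxx.
Qed.

Lemma all_V b : allowedV b -> b != set0 -> exists2 x, x \in L & b \subset oV x.
Proof.
move=> /orP[/cards1P[e ->]|/existsP[i /eqP ->]] _.
  have [x xL ex] := rep_V e; exists x => //; by rewrite ex sub1set !inE eqxx.
have [x xL ex] := rep_V i; exists x => //; by rewrite ex.
Qed.

Lemma cov_V : true -> forall t, exists2 x, x \in L & t \in oV x.
Proof.
move=> _ t; have [x xL ex] := rep_V t; exists x => //; by rewrite ex !inE eqxx.
Qed.

Lemma blocks_V x : [set b | allowedV b & b \subset oV x] = S3 x (tau x).
Proof.
apply/setP=> c; rewrite !inE /S3 /oV; apply/idP/idP.
  case/andP=> /orP[/cards1P[e ->]|/existsP[i /eqP ->]]; rewrite ?sub1set.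
    by rewrite !inE => /orP[]/eqP->; rewrite eqxx ?orbT.
  rewrite subUset !sub1set !inE => /andP[/orP[]/eqP-> _]; first by rewrite eqxx !orbT.
  by rewrite tauK setUC eqxx !orbT.
rewrite -orbA => /orP[/eqP->|/orP[/eqP->|/eqP->]].
- by rewrite /allowedV /atomic cards1 sub1set !inE !eqxx ?orbT.
- by rewrite /allowedV /atomic cards1 sub1set !inE !eqxx ?orbT.
- rewrite subxx andbT /allowedV; apply/orP; right; apply/existsP; by exists x.
Qed.

Lemma card_VS : #|[set P | Good allowedV true P]| = 2 ^ (p %/ 2).
Proof.
rewrite (card_Good disj_V all_V cov_V) -cardL -prod_nat_const.
apply: eq_bigr=> x xL; rewrite /Loc blocks_V.
by apply: card_full2; rewrite eq_sym tau_neq.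
Qed.
End Main.

Section Edges.
Variables (p : nat) (tau : 'I_p -> 'I_p).
Hypothesis tauK : involutive tau.

Notation te := (tau_edge tau).

Lemma te_FV e : e \in FV p -> te e \in FV p.
Proof.
case: e => a b; rewrite !inE /= /tau_edge => ab.
case: ifP => h //=.
have nab : tau a != tau b.
  rewrite (inj_eq (can_inj tauK)); apply/eqP=> e; move: ab; by rewrite e ltnn.
move: h => /= /negbT; rewrite -leqNgt => h; by rewrite ltn_neqAle h andbT eq_sym.
Qed.

Lemma teK e : e \in FV p -> te (te e) = e.
Proof.
case: e => a b; rewrite !inE /= => ab; rewrite [tau_edge _ (a, b)]/tau_edge /=.
case h: (tau a < tau b) => /=; rewrite /tau_edge /= !tauK ?ab //.
by rewrite ltnNge (ltnW ab).
Qed.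

Definition RpE : {set edge p} := [set e in FV p | enum_rank e <= enum_rank (te e)].
Definition oE (e : edge p) : {set edge p} := [set e; te e].

Lemma rep_E e : e \in FV p -> exists2 x, x \in RpE & oE x = oE e.
Proof.
move=> eF; case h: (enum_rank e <= enum_rank (te e)).
  by exists e; rewrite //; apply/setIdP.
exists (te e); last by rewrite /oE teK // setUC.
apply/setIdP; split; first exact: te_FV.
by rewrite teK // ltnW // ltnNge h.
Qed.

Lemma RpE_FV x : x \in RpE -> x \in FV p.
Proof. by move=> /setIdP[]. Qed.

Lemma RpE_te x : x \in RpE -> te x \in RpE -> te x = x.
Proof.
move=> /setIdP[xF h1] /setIdP[_]; rewrite teK // => h2.
apply: enum_rank_inj; apply: val_inj; apply/eqP; rewrite eqn_leq h2 h1 //.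
Qed.

Lemma disj_E x y : x \in RpE -> y \in RpE -> x != y -> [disjoint oE x & oE y].
Proof.
move=> xR yR nxy; apply/pred0P=> t /=; rewrite !inE.
apply/negP=> /andP[/orP[]/eqP-> /orP[]/eqP e].
- by rewrite e eqxx in nxy.
- have yF := RpE_FV yR.
  move: xR; rewrite e => tR; have := RpE_te yR tR => e2.
  by move: nxy; rewrite e e2 eqxx.
- have xF := RpE_FV xR.
  move: yR; rewrite -e => tR; have := RpE_te xR tR => e2.
  by move: nxy; rewrite -e e2 eqxx.
- have xF := RpE_FV xR; have yF := RpE_FV yR.
  by move: nxy; rewrite -(teK xF) e (teK yF) eqxx.
Qed.

Definition allowedE (C : {set edge p}) := (C \subset FV p) && (atomic C || twin_edge_class tau C).

Lemma all_E b : allowedE b -> b != set0 -> exists2 x, x \in RpE & b \subset oE x.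
Proof.
move=> /andP[bF /orP[/cards1P[e be]|/existsP[e /and3P[eF _ /eqP be]]]] _; subst b.
  have eF : e \in FV p by rewrite -sub1set.
  have [x xR ex] := rep_E eF; exists x => //; by rewrite ex sub1set !inE eqxx.
have [x xR ex] := rep_E eF; exists x => //; by rewrite ex.
Qed.

Lemma cov_E : false -> forall t : edge p, exists2 x, x \in RpE & t \in oE x.
Proof. by []. Qed.

Lemma blocks_E_fix x : x \in RpE -> te x = x ->
  [set b | allowedE b & b \subset oE x] = [set [set x]].
Proof.
move=> xR tx; have xF := RpE_FV xR.
apply/setP=> c; rewrite !inE /oE tx setUid; apply/idP/idP.
  case/andP=> /andP[_ /orP[/cards1P[e ->]|/existsP[e /and3P[eF ne /eqP ->]]]].
    by rewrite sub1set inE => /eqP->.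
  rewrite subUset !sub1set !inE => /andP[/eqP e1 /eqP e2].
  by move: ne; rewrite e2 e1 eqxx.
move/eqP->; by rewrite subxx andbT /allowedE /atomic cards1 sub1set xF.
Qed.

Lemma blocks_E x : x \in RpE -> te x != x ->
  [set b | allowedE b & b \subset oE x] = S3 x (te x).
Proof.
move=> xR tx; have xF := RpE_FV xR.
apply/setP=> c; rewrite !inE /S3 /oE; apply/idP/idP.
  case/andP=> /andP[_ /orP[/cards1P[e ->]|/existsP[e /and3P[eF ne /eqP ->]]]].
    by rewrite sub1set !inE => /orP[]/eqP->; rewrite eqxx ?orbT.
  rewrite subUset !sub1set !inE => /andP[/orP[]/eqP-> _]; first by rewrite eqxx !orbT.
  by rewrite teK // setUC eqxx !orbT.
rewrite -orbA => /orP[/eqP->|/orP[/eqP->|/eqP->]].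
- by rewrite /allowedE /atomic cards1 !sub1set xF !inE ?eqxx.
- by rewrite /allowedE /atomic cards1 !sub1set te_FV // !inE ?eqxx ?orbT.
- rewrite subxx andbT /allowedE subUset !sub1set xF te_FV //=.
  apply/orP; right; apply/existsP; exists x; by rewrite xF eq_sym tx eqxx.
Qed.

Definition Fx := [set x in RpE | te x == x].
Definition Nx := [set x in RpE | te x != x].

Lemma card_ES : #|[set Q | Good allowedE false Q]| = 2 ^ #|Fx| * 5 ^ #|Nx|.
Proof.
rewrite (card_Good disj_E all_E cov_E) (bigID (fun x => te x == x)) /=.
rewrite -!prod_nat_const; congr (_ * _).
  apply: eq_big => [x|x /andP[xR /eqP tx]]; first by rewrite /Fx inE.
  rewrite /Loc blocks_E_fix //.
  by rewrite -(card_loc1 x); apply: eq_card => Q; rewrite !inE /= andbT.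
apply: eq_big => [x|x /andP[xR tx]]; first by rewrite /Nx inE.
rewrite /Loc blocks_E //.
rewrite -(card_free2 (a:=x) (b:=te x)) 1?eq_sym //; apply: eq_card => Q; by rewrite !inE /= andbT.
Qed.
End Edges.

Lemma card_FV p : #|FV p| = 'C(p, 2).
Proof.
rewrite -sum1_card big_mkcond /=.
rewrite (eq_bigr (fun e : 'I_p * 'I_p => if (e.1, e.2) \in FV p then 1 else 0)); last by case.
rewrite -(pair_bigA _ (fun i j => if (i, j) \in FV p then 1 else 0)) /= exchange_big /=.
rewrite -bin2_sum big_mkord; apply: eq_bigr => j _.
rewrite (eq_bigr (fun i : 'I_p => (i < j : nat))); last by move=> i _; rewrite inE /=; case: (i < j).
rewrite -(big_mkord xpredT (fun i => (i < j : nat))).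
rewrite (big_cat_nat _ (n := j)) //= ?(ltnW (ltn_ord j)) //.
rewrite (eq_big_nat _ _ (F2 := fun=> 1)); last by move=> i /andP[_ ->].
rewrite (eq_big_nat _ _ (F1 := fun i => (i < j : nat)) (F2 := fun=> 0)); last first.
  by move=> i /andP[h _]; rewrite ltnNge h.
by rewrite !sum_nat_const_nat muln0 addn0 muln1 subn0.
Qed.

Section Count.
Variables (p : nat) (tau : 'I_p -> 'I_p).
Hypothesis tauK : involutive tau.
Variable L : {set 'I_p}.
Hypothesis LR : forall i, (i \in L) = (tau i \notin L).

Notation te := (tau_edge tau).

Definition gL (i : 'I_p) : edge p := if i < tau i then (i, tau i) else (tau i, i).

Lemma card_Fx : #|Fx tau| = #|L|.
Proof.
have gF i : gL i \in FV p.
  rewrite /gL inE; case: ifP => //= /negbT; rewrite -leqNgt leq_eqVlt => /orP[] //.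
  by move=> /eqP/val_inj e; have := tau_neq LR i; rewrite e eqxx.
have gt i : te (gL i) = gL i.
  rewrite /gL; case: ifP => h; rewrite /tau_edge /= tauK.
    by rewrite ltnNge (ltnW h).
  by rewrite h.
have -> : Fx tau = gL @: L.
  apply/setP=> e; apply/idP/imsetP.
    rewrite inE => /andP[/setIdP[eF _] /eqP te_e].
    move: eF te_e; case: e => a b; rewrite inE /= => ab.
    rewrite /tau_edge /=; case: ifP => h [e1 e2].
      by have := tau_neq LR a; rewrite e1 eqxx.
    case aL: (a \in L).
      by exists a => //; rewrite /gL e2 ab.
    exists (tau a); first by rewrite LR tauK aL.
    by rewrite /gL tauK e2 ltnNge (ltnW ab).
  case=> i iL ->; rewrite inE gt eqxx andbT; apply/setIdP; split => //.
  by rewrite gt.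
rewrite card_in_imset // => i j iL jL; rewrite /gL.
case: ifP => _; case: ifP => _ [e1 e2] //;
  first [ by move: iL; rewrite LR e1 jL
        | by move: jL; rewrite LR -e1 iL
        | by move: iL; rewrite e1 LR tauK jL
        | by move: jL; rewrite e2 LR tauK iL
        | by move: iL; rewrite LR e2 jL
        | by move: jL; rewrite LR -e2 iL
        | exact: (can_inj tauK) ].
Qed.

Lemma card_FV_split : #|FV p| = #|Fx tau| + 2 * #|Nx tau|.
Proof.
set NF := [set e in FV p | te e != e].
have eFx : Fx tau = [set e in FV p | te e == e].
  apply/setP=> e; rewrite /Fx /RpE !inE; case h: (te e == e); rewrite ?andbF ?andbT //.
  by rewrite (eqP h) leqnn andbT.
have -> : FV p = Fx tau :|: NF.
  by apply/setP=> e; rewrite eFx !inE; case: (te e == e); rewrite ?andbT ?andbF ?orbF.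
rewrite cardsU.
have -> : Fx tau :&: NF = set0.
  by apply/setP=> e; rewrite eFx !inE; case: (te e == e); rewrite ?andbF.
rewrite cards0 subn0; congr (_ + _).
have NxF x : x \in Nx tau -> x \in FV p by case/setIdP=> /setIdP[].
have -> : NF = Nx tau :|: te @: Nx tau.
  apply/setP=> e; apply/setIdP/setUP.
    case=> eF ne; case h: (enum_rank e <= enum_rank (te e)).
      by left; rewrite inE ne andbT; apply/setIdP.
    right; apply/imsetP; exists (te e); last by rewrite teK.
    rewrite inE teK // eq_sym ne andbT; apply/setIdP; split; first exact: te_FV.
    by rewrite teK // ltnW // ltnNge h.
  case=> [/setIdP[/setIdP[eF _] ne] //|/imsetP[y yN ->]].
  have yF := NxF y yN; split; first exact: te_FV.
  by rewrite teK //; case/setIdP: yN => _; rewrite eq_sym.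
rewrite cardsU card_in_imset; last first.
  by move=> x y /NxF xF /NxF yF e; rewrite -(teK tauK xF) e teK.
have -> : Nx tau :&: te @: Nx tau = set0.
  apply/setP=> e; rewrite inE in_set0; apply/negP=> /andP[eN /imsetP[y yN ey]].
  have yF := NxF y yN.
  case/setIdP: eN => eR ne; case/setIdP: yN => yR _.
  have : te e \in RpE tau by rewrite ey teK.
  by move/(RpE_te tauK eR)/eqP; rewrite (negbTE ne).
by rewrite cards0 subn0 addnn mul2n.
Qed.
End Count.

Lemma split_pdCGs p (tau : 'I_p -> 'I_p) :
  pdCGs tau = setX [set P | Good (allowedV tau) true P] [set Q | Good (allowedE tau) false Q].
Proof.
apply/setP=> [[P Q]]; rewrite !inE /pdCG /coloured_graph /Good /partition /=.
rewrite eqxx /= !andbT.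
have -> : [forall b in Q, allowedE tau b] =
          (cover Q \subset FV p) && [forall C in Q, atomic C || twin_edge_class tau C].
  apply/forall_inP/andP.
    move=> H; split.
      by apply/bigcupsP=> b bQ; case/andP: (H b bQ).
    by apply/forall_inP=> b bQ; case/andP: (H b bQ).
  case=> /bigcupsP H1 /forall_inP H2 b bQ; apply/andP; split; [exact: H1 | exact: H2].
rewrite /allowedV.
move: (cover P == setT) (trivIset P) (set0 \in P) (trivIset Q) (set0 \in Q) (cover Q \subset FV p).
move: [forall b in P, atomic b || twin_vertex_class tau b].
move: [forall C in Q, atomic C || twin_edge_class tau C].
by do 8![case].
Qed.

Unset Implicit Arguments.
Theorem mainTheorem9 (p : nat) (tau : 'I_p -> 'I_p) :
  ~~ odd p -> twin_pairing tau ->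
  #|pdCGs tau| =
    2 ^ (p %/ 2) *
    \sum_(i < (p * (p - 2) %/ 4).+1)
       'C(p * (p - 2) %/ 4, i) * 2 ^ ('C(p, 2) - 2 * i).
Proof.
move=> _ [Hs [L [R [LR0 LRU tLR]]]].
have tauK : involutive tau by move=> i; exact: Hs.
have inR x : (x \in R) = (x \notin L).
  apply/idP/idP.
    move=> xR; apply/negP=> xL; have : x \in L :&: R by rewrite inE xL.
    by rewrite LR0 inE.
  move=> xL; have : x \in L :|: R by rewrite LRU inE.
  by rewrite inE (negbTE xL).
have LR : forall i, (i \in L) = (tau i \notin L).
  move=> i; rewrite -inR; apply/idP/idP.
    by move=> iL; rewrite -tLR; apply: imset_f.
  by rewrite -tLR => /imsetP[j jL /(can_inj tauK) ->].
rewrite split_pdCGs cardsX (card_VS tauK LR) (card_ES tauK) (card_Fx tauK LR) (cardL tauK LR).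
have hF := card_FV_split tauK; rewrite card_FV (card_Fx tauK LR) (cardL tauK LR) in hF.
have pk : p = (p %/ 2) * 2 by rewrite -(cardL tauK LR) muln2 -addnn (cardL2 tauK LR).
move: hF pk; set k := p %/ 2; set n := #|Nx tau| => hF pk.
congr (_ * _); rewrite [in RHS]pk; apply: arith.
by rewrite -pk.
Qed.
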